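(* Let $p\geq r$ and let $A$ be a nonnegative symmetric $r$-matrix of order $n$. If $A$ is regular, then $\eta^{(p)}(A)=n^{-r/p}\Sigma A$.
   Context: A cubical $r$-matrix of order $n$ is a function $A$ on $[n]^r$ with entries $a_{i_1,\ldots,i_r}$; symmetric means invariant under permutations of indices. $\Sigma B$ denotes the sum of all entries of a matrix $B$. $\eta^{(p)}(A)=\max\{|\sum a_{i_1,\ldots,i_r}x_{i_1}\cdots x_{i_r}|:\mathbf{x}\in\mathbb{R}^n,|\mathbf{x}|_p=1\}$. For $k\in[r]$, $s\in[n]$, the slice $A^{(k)}_s$ is the $(r-1)$-matrix obtained by fixing $i_k=s$. $A$ is regular if for every $k\in[r]$, $\Sigma A^{(k)}_1=\cdots=\Sigma A^{(k)}_n$. *)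

(* Defs.v *)
From HB Require Import structures.
From mathcomp Require Import all_boot all_order all_algebra all_fingroup.
From mathcomp Require Import all_classical all_reals all_analysis.
Set Implicit Arguments. Unset Strict Implicit. Unset Printing Implicit Defensive.
Import Order.TTheory GRing.Theory Num.Theory.
Local Open Scope ring_scope.
Local Open Scope classical_set_scope.

Definition cmatrix (R : realType) (r n : nat) := {ffun 'I_r -> 'I_n} -> R.

Definition entry_sum (R : realType) r n (A : cmatrix R r n) : R := \sum_i A i.

Definition mnonneg (R : realType) r n (A : cmatrix R r n) : Prop :=
  forall i, 0 <= A i.

Definition msymmetric (R : realType) r n (A : cmatrix R r n) : Prop :=
  forall (s : 'S_r) (i : {ffun 'I_r -> 'I_n}), A [ffun k => i (s k)] = A i.

Definition slice_sum (R : realType) r n (A : cmatrix R r n) (k : 'I_r) (s : 'I_n) : R :=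
  \sum_(i : {ffun 'I_r -> 'I_n} | i k == s) A i.

Definition mregular (R : realType) r n (A : cmatrix R r n) : Prop :=
  forall (k : 'I_r) (s t : 'I_n), slice_sum A k s = slice_sum A k t.

Definition pnorm (R : realType) n (p : R) (x : 'I_n -> R) : R :=
  (\sum_j `|x j| `^ p) `^ p^-1.

Definition mform (R : realType) r n (A : cmatrix R r n) (x : 'I_n -> R) : R :=
  \sum_(i : {ffun 'I_r -> 'I_n}) A i * \prod_(k < r) x (i k).

(* eta^{(p)}(A) = max { |A(x)| : |x|_p = 1 }; the max is attained (compactness),
   so it equals the supremum. *)
Definition eta_norm (R : realType) r n (p : R) (A : cmatrix R r n) : R :=
  sup [set `|mform A x| | x in [set x : 'I_n -> R | pnorm p x = 1]].

(* Main.v *)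
Require Import Defs.
From HB Require Import structures.
From mathcomp Require Import all_boot all_order all_algebra all_fingroup.
From mathcomp Require Import all_classical all_reals all_analysis.
From mathcomp Require Import ring lra.
Import Order.TTheory GRing.Theory Num.Theory.
Local Open Scope ring_scope.
Lemma powR_prod (R : realType) (m : nat) (f : 'I_m -> R) (c : R) :
  (forall k, 0 <= f k) -> (\prod_k f k) `^ c = \prod_k (f k `^ c).
Proof.
elim: m f => [|m IH] f f0; first by rewrite !big_ord0 powR1.
rewrite !big_ord_recl powRM //; last by apply: prodr_ge0.
by rewrite IH.
Qed.

Lemma amgm (R : realType) (m : nat) (a : R) (u : 'I_m -> R) :
  0 < a -> m%:R * a <= 1 -> (forall k, 0 <= u k) ->
  \prod_k (u k `^ a) <= (1 - m%:R * a) + a * \sum_k u k.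
Proof.
elim: m a u => [|m IH] a u a0 ma u0.
  by rewrite big_ord0 big_ord0 !mul0r subr0 mulr0 addr0.
rewrite big_ord_recl big_ord_recl.
have [a1|a1] := eqVneq a 1.
  subst a; move: ma; rewrite mulr1 -natr1 => ma.
  have m0 : m = 0%N.
    have : (m%:R : R) <= 0%:R by lra.
    by rewrite ler_nat leqn0 => /eqP.
  subst m; rewrite !big_ord0 mulr1 powRr1 ?u0 //. lra.
have alt : a < 1.
  have hm : 1 <= (m.+1%:R : R) by rewrite ler1n.
  have : a <= 1 by apply: le_trans ma; nra.
  by rewrite le_eqVlt (negbTE a1).
pose q := (1 - a)^-1.
have q0 : 0 < q by rewrite invr_gt0 subr_gt0.
pose a' := a * q.
have a'0 : 0 < a' by apply: mulr_gt0.
have hB : 0 <= \prod_(i < m) u (lift ord0 i) `^ a by apply: prodr_ge0 => *; apply: powR_ge0.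
have ia0 : 0 < a^-1 by rewrite invr_gt0.
have Y := conjugate_powR (powR_ge0 (u ord0) a) hB ia0 q0.
move: Y; rewrite /q (invrK a) (invrK (1 - a)) => Y.
have Y' := Y ltac:(lra).
have e0 : (u ord0 `^ a) `^ a^-1 = u ord0 by rewrite -powRrM mulfV ?gt_eqF // powRr1.
rewrite e0 in Y'.
rewrite powR_prod in Y'; last by move=> k; apply: powR_ge0.
have ma' : m%:R * a' <= 1.
  rewrite /a' /q mulrA ler_pdivrMr ?subr_gt0 // mul1r.
  move: ma; rewrite -natr1; lra.
have IH' := IH a' (fun k => u (lift ord0 k)) a'0 ma' (fun k => u0 _).
have e1 : \prod_(i < m) (u (lift ord0 i) `^ a) `^ (1 - a)^-1 = \prod_(i < m) u (lift ord0 i) `^ a'.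
  by apply: eq_bigr => i _; rewrite -powRrM.
rewrite e1 in Y'.
apply: (le_trans Y').
have h1 : 1 - a != 0 by rewrite subr_eq0 eq_sym.
have a1p : 0 < 1 - a by rewrite subr_gt0.
have H : \prod_(i < m) u (lift ord0 i) `^ a' * (1 - a) <=
       (1 - m%:R * a' + a' * \sum_(i < m) u (lift ord0 i)) * (1 - a).
  by rewrite ler_pM2r.
apply: (le_trans (lerD (lexx _) H)).
have ea : a' * (1 - a) = a by rewrite /a' /q -mulrA mulVf ?mulr1 // gt_eqF.
have -> : (1 - m%:R * a' + a' * \sum_(i < m) u (lift ord0 i)) * (1 - a)
   = (1 - a) - m%:R * (a' * (1 - a)) + (a' * (1 - a)) * \sum_(i < m) u (lift ord0 i) by ring.
rewrite ea -natr1. lra.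
Qed.

Lemma sum_weight (R : realType) r n (A : cmatrix R r n) (k : 'I_r) (g : 'I_n -> R) :
  \sum_i A i * g (i k) = \sum_s g s * slice_sum A k s.
Proof.
rewrite (partition_big (fun i : {ffun 'I_r -> 'I_n} => i k) predT) //=.
apply: eq_bigr => s _; rewrite /slice_sum mulr_sumr.
by apply: eq_bigr => i /eqP ->; rewrite mulrC.
Qed.

Lemma slice_const (R : realType) r n (A : cmatrix R r n) (k : 'I_r) (s : 'I_n) :
  (0 < n)%N -> mregular A -> slice_sum A k s = entry_sum A / n%:R.
Proof.
move=> n0 reg.
have e : entry_sum A = \sum_t slice_sum A k t.
  have := @sum_weight _ _ _ A k (fun _ => 1).
  by under eq_bigr do rewrite mulr1; under [in RHS]eq_bigr do rewrite mul1r.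
have -> : entry_sum A = slice_sum A k s *+ n.
  rewrite e (eq_bigr (fun _ => slice_sum A k s)); last by move=> t _; apply: reg.
  by rewrite sumr_const card_ord.
by rewrite -[_ *+ n]mulr_natr mulfK // pnatr_eq0 -lt0n n0.
Qed.

Lemma cN_inv (R : realType) (n r : nat) (p : R) : (0 < n)%N -> 0 < p ->
  (n%:R : R) `^ (- (r%:R / p)) * ((n%:R : R) `^ p^-1) ^+ r = 1.
Proof.
move=> n0 p0.
have N0 : 0 < (n%:R : R) by rewrite ltr0n.
rewrite -powR_mulrn ?powR_ge0 // -powRrM powRN.
rewrite [p^-1 * _]mulrC mulVf // gt_eqF //.
by rewrite powR_gt0.
Qed.

Lemma prod_bound (R : realType) r n (p : R) (x : 'I_n -> R) (i : {ffun 'I_r -> 'I_n}) :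
  (0 < n)%N -> 0 < p -> r%:R <= p ->
  \prod_(k < r) `|x (i k)| <= (n%:R : R) `^ (- (r%:R / p)) *
     ((1 - r%:R * p^-1) + p^-1 * \sum_(k < r) (n%:R : R) * `|x (i k)| `^ p).
Proof.
move=> n0 p0 rp.
have N0 : 0 < (n%:R : R) by rewrite ltr0n.
have rp1 : r%:R * p^-1 <= 1 by rewrite ler_pdivrMr // mul1r.
have := @amgm R r p^-1 (fun k => n%:R * `|x (i k)| `^ p) ltac:(by rewrite invr_gt0) rp1
   (fun k => mulr_ge0 (ltW N0) (powR_ge0 _ _)).
have eu : forall k : 'I_r, (n%:R * `|x (i k)| `^ p) `^ p^-1 = (n%:R : R) `^ p^-1 * `|x (i k)|.
  move=> k; rewrite powRM ?powR_ge0 ?(ltW N0) //.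
  have -> : (`|x (i k)| `^ p) `^ p^-1 = `|x (i k)|.
    by rewrite -powRrM mulfV ?gt_eqF // powRr1.
  by [].
rewrite (eq_bigr _ (fun k _ => eu k)) big_split /= prodr_const card_ord => H.
have c0 : 0 <= (n%:R : R) `^ (- (r%:R / p)) by apply: powR_ge0.
have -> : \prod_(k < r) `|x (i k)| = (n%:R : R) `^ (- (r%:R / p)) *
   ((n%:R : R) `^ p^-1 ^+ r * \prod_(k < r) `|x (i k)|).
  by rewrite mulrA (@cN_inv R n r p n0 p0) mul1r.
by rewrite ler_wpM2l.
Qed.

Theorem theorem19 (R : realType) (r n : nat) (p : R) (A : cmatrix R r n) :
  (0 < r)%N -> (0 < n)%N -> r%:R <= p ->
  mnonneg A -> msymmetric A -> mregular A ->
  eta_norm p A = (n%:R : R) `^ (- (r%:R / p)) * entry_sum A.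
Proof.
move=> r0 n0 rp A0 _ reg.
have N0 : 0 < (n%:R : R) by rewrite ltr0n.
have p0 : 0 < p.
  by apply: lt_le_trans rp; rewrite ltr0n.
set c := (n%:R : R) `^ (- (r%:R / p)).
set S := entry_sum A.
have S0 : 0 <= S by apply: sumr_ge0 => i _; apply: A0.
have c0 : 0 <= c by apply: powR_ge0.
pose x0 : 'I_n -> R := fun _ => (n%:R : R) `^ (- p^-1).
have hx0 : pnorm p x0 = 1.
  rewrite /pnorm /x0.
  have e : `|(n%:R : R) `^ (- p^-1)| `^ p = (n%:R)^-1.
    by rewrite ger0_norm ?powR_ge0 // -powRrM mulNr mulVf ?gt_eqF // powR_inv1 ?ltW.
  rewrite (eq_bigr _ (fun j _ => e)) sumr_const card_ord -[_ *+ n]mulr_natr mulVf ?gt_eqF //.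
  by rewrite powR1.
have mx0 : mform A x0 = c * S.
  rewrite /mform /x0 /S /entry_sum.
  under eq_bigr do rewrite prodr_const card_ord.
  rewrite -mulr_suml mulrC; congr (_ * _).
  by rewrite -powR_mulrn ?powR_ge0 // -powRrM mulNr mulrC.
have ub : forall x, pnorm p x = 1 -> `|mform A x| <= c * S.
  move=> x hx.
  have hs : \sum_j `|x j| `^ p = 1.
    move: hx; rewrite /pnorm => hx.
    have := congr1 (fun t => t `^ p) hx.
    rewrite /= -powRrM mulVf ?gt_eqF // powRr1 ?powR1 //.
    by apply: sumr_ge0 => j _; apply: powR_ge0.
  apply: le_trans (ler_norm_sum _ _ _) _.
  apply: (@le_trans _ _ (\sum_i A i * (c * ((1 - r%:R * p^-1) +
          p^-1 * \sum_(k < r) (n%:R : R) * `|x (i k)| `^ p)))).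
    apply: ler_sum => i _; rewrite normrM normr_prod ger0_norm ?A0 //.
    by apply: ler_wpM2l; [apply: A0 | apply: prod_bound].
  have e1 : forall i : {ffun 'I_r -> 'I_n},
      A i * (c * ((1 - r%:R * p^-1) + p^-1 * \sum_(k < r) (n%:R : R) * `|x (i k)| `^ p))
      = c * (1 - r%:R * p^-1) * A i + c * p^-1 * n%:R * \sum_(k < r) A i * `|x (i k)| `^ p.
    move=> i; rewrite -mulr_sumr -mulr_sumr; ring.
  rewrite (eq_bigr _ (fun i _ => e1 i)) big_split /= -!mulr_sumr exchange_big /=.
  have e2 : forall k : 'I_r, \sum_i A i * `|x (i k)| `^ p = S / n%:R.
    move=> k; rewrite (@sum_weight _ _ _ A k (fun s => `|x s| `^ p)).
    rewrite (eq_bigr _ (fun s _ => congr1 (fun t => `|x s| `^ p * t) (@slice_const _ _ _ A k s n0 reg))).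
    by rewrite -mulr_suml hs mul1r.
  rewrite (eq_bigr _ (fun k _ => e2 k)) sumr_const card_ord -/S -[(S / _) *+ r]mulr_natr.
  rewrite le_eqVlt; apply/orP; left; apply/eqP.
  have -> : \sum_i A i = S by [].
  move: (S) (c) => S1 c1. field. by rewrite !gt_eqF.
rewrite /eta_norm; set E := (X in sup X).
have inE : E (c * S).
  exists x0 => //; rewrite mx0 ger0_norm //; exact: mulr_ge0.
have ubE : ubound E (c * S).
  by move=> y [x hx <-]; apply: ub.
apply/le_anti/andP; split.
  by apply: ge_sup => //; exists (c * S).
by apply: sup_upper_bound => //; split; [exists (c * S) | exists (c * S)].
Qed.
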